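(* Suppose that $f$ is continuously differentiable with $\nabla f$ Lipschitz continuous with constant $L_{\nabla f}$. Then, for every iteration $k$ of CLARSTA, the model $\widehat m_k$ belongs to a class of $(\mathcal{C},\boldsymbol{Q}_k)$-fully linear models of $f$ at $\boldsymbol{x}_k$ parameterized by $\Delta_k\in(0,\Delta_{\max}]$, with constants $$\kappa_{ef}=\left(\tfrac12L_{\nabla f}\left(1+\sqrt{p}M_{\widehat{\boldsymbol{R}}^{-1}}\right)\right)\epsilon_{\mathrm{rad}}^2,\qquad\kappa_{eg}=\left(\tfrac12L_{\nabla f}\left(2+\sqrt{p}M_{\widehat{\boldsymbol{R}}^{-1}}\right)\right)\epsilon_{\mathrm{rad}},$$ where $M_{\widehat{\boldsymbol{R}}^{-1}}=\max\{1/\epsilon_{\mathrm{geo}},1/\Delta_{\min}\}\epsilon_{\mathrm{rad}}\Delta_{\max}$; that is, for all $\widehat{\boldsymbol{s}}\in\boldsymbol{Q}_k^\top(\mathcal{C}-\boldsymbol{x}_k)$ with $\|\widehat{\boldsymbol{s}}\|\le\Delta_k$, $|f(\boldsymbol{x}_k+\boldsymbol{Q}_k\widehat{\boldsymbol{s}})-\widehat m_k(\widehat{\boldsymbol{s}})|\le\kappa_{ef}\Delta_k^2$ and $\max_{\boldsymbol{d}\in\boldsymbol{Q}_k^\top(\mathcal{C}-\boldsymbol{x}_k),\|\boldsymbol{d}\|\le1}|(\boldsymbol{Q}_k^\top\nabla f(\boldsymbol{x}_k+\boldsymbol{Q}_k\widehat{\boldsymbol{s}})-\nabla\widehat m_k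(\widehat{\boldsymbol{s}}))^\top\boldsymbol{d}|\le\kappa_{eg}\Delta_k$.
   Context: Problem: minimize $f:\mathbb{R}^n\to\mathbb{R}$ over $\mathcal{C}\subseteq\mathbb{R}^n$, closed convex with nonempty interior. $\|\cdot\|$ Euclidean/spectral norm; $\mathrm{proj}_{\mathcal{C}}$ Euclidean projection; $\sigma_{\min}$ smallest singular value. QR-factorizations $\boldsymbol{D}=\boldsymbol{Q}\boldsymbol{R}$ of full-column-rank $\boldsymbol{D}\in\mathbb{R}^{n\times p}$ have $\boldsymbol{Q}$ with orthonormal columns and invertible $\boldsymbol{R}$. $\boldsymbol{Q}^\top(\mathcal{C}-\boldsymbol{x})=\{\boldsymbol{Q}^\top(\boldsymbol{z}-\boldsymbol{x}):\boldsymbol{z}\in\mathcal{C}\}$. Algorithm CLARSTA. Parameters: integers $1\le p_{\mathrm{rand}}\le p\le n$; $\boldsymbol{x}_0\in\mathcal{C}$; $\Delta_0>0$; $0<\Delta_{\min}\le\Delta_{\max}$; $\gamma_{\mathrm{dec}}\in(0,1)$; $\gamma_{\mathrm{inc}}^k\ge1$; $0<\eta_1\le\eta_2<1$; $\mu>0$; $\epsilon_{\mathrm{rad}}\ge1$; $\epsilon_{\mathrm{geo}}>0$. GEN$(q,\Delta,\boldsymbol{Q})$ ($\boldsymbol{Q}$ optional, orthonormal columns): draw $\boldsymbol{A}\in\mathbb{R}^{n\times q}$ with i.i.d. $\mathcal{N}(0,1)$ entries, of full column rank; $\widetilde{\boldsymbol{A}}=\boldsymbol{A}-\boldsymbol{Q}\boldsymbol{Q}^\top\boldsymbol{A}$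 if $\boldsymbol{Q}$ given, else $\boldsymbol{A}$; QR $\widetilde{\boldsymbol{A}}=[\widetilde{\boldsymbol{q}}_1\cdots\widetilde{\boldsymbol{q}}_q]\widetilde{\boldsymbol{R}}$; return $\Delta\widetilde{\boldsymbol{q}}_1,\dots,\Delta\widetilde{\boldsymbol{q}}_q$. REMOVE$(\boldsymbol{D}^U,\Delta,r)$: repeat $r$ times: for $\boldsymbol{D}^U=[\boldsymbol{d}_1\cdots\boldsymbol{d}_m]$ let $\boldsymbol{M}_i$ be $\boldsymbol{D}^U$ without column $i$, $\theta_i=\sigma_{\min}(\boldsymbol{M}_i)\max(\|\boldsymbol{d}_i\|^4/\Delta^4,1)$; delete the column with largest $\theta_i$. Initialization: $\boldsymbol{D}_0$ = columns GEN$(p,\Delta_0)$. Iteration $k$: QR $\boldsymbol{D}_k=[\boldsymbol{d}_1\cdots\boldsymbol{d}_p]=\boldsymbol{Q}_k\boldsymbol{R}_k$, $\boldsymbol{R}_k=[\boldsymbol{r}_1\cdots\boldsymbol{r}_p]$; $\widehat f_k(\widehat{\boldsymbol{s}})=f(\boldsymbol{x}_k+\boldsymbol{Q}_k\widehat{\boldsymbol{s}})$; $\widehat m_k(\widehat{\boldsymbol{s}})=\widehat f_k(\boldsymbol{0}_p)+\boldsymbol{g}_k^\top\widehat{\boldsymbol{s}}$, $\boldsymbol{g}_k=(\boldsymbol{R}_k^\top)^{-1}\boldsymbol{\delta}_k$, $(\boldsymbol{\delta}_k)_i=\widehat f_k(\boldsymbol{r}_i)-\widehat f_k(\boldsymbol{0}_p)$;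 $\pi^m(\boldsymbol{x}_k)=\left|\min_{\boldsymbol{d}\in\boldsymbol{Q}_k^\top(\mathcal{C}-\boldsymbol{x}_k),\|\boldsymbol{d}\|\le1}\nabla\widehat m_k(\boldsymbol{0}_p)^\top\boldsymbol{d}\right|$. If $\Delta_k\le\mu\pi^m(\boldsymbol{x}_k)$: approximately solve $\min\{\widehat m_k(\widehat{\boldsymbol{s}}):\widehat{\boldsymbol{s}}\in\boldsymbol{Q}_k^\top\mathcal{C},\|\widehat{\boldsymbol{s}}\|\le\Delta_k\}$ giving $\widehat{\boldsymbol{s}}_k$; $\boldsymbol{s}_k=\mathrm{proj}_{\mathcal{C}}(\boldsymbol{x}_k+\boldsymbol{Q}_k\widehat{\boldsymbol{s}}_k)-\boldsymbol{x}_k$; $\rho_k=\frac{f(\boldsymbol{x}_k)-f(\boldsymbol{x}_k+\boldsymbol{s}_k)}{\widehat m_k(\boldsymbol{0}_p)-\widehat m_k(\widehat{\boldsymbol{s}}_k)}$; $\Delta_{k+1}=\gamma_{\mathrm{dec}}\Delta_k$ if $\rho_k<\eta_1$, $\min(\gamma^k_{\mathrm{inc}}\Delta_k,\Delta_{\max})$ if $\rho_k>\eta_2$, $\Delta_k$ otherwise; $\boldsymbol{x}_{k+1}$ any point of $\mathcal{C}$ with $f(\boldsymbol{x}_{k+1})\le\min(\{f(\boldsymbol{x}_k+\boldsymbol{s}_k)\}\cup\{f(\boldsymbol{x}_k+\boldsymbol{d}_i+\boldsymbol{d}_j):\boldsymbol{x}_k+\boldsymbol{d}_i+\boldsymbol{d}_j\in\mathcal{C},\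 \boldsymbol{d}_i,\boldsymbol{d}_j\text{ columns of }[\boldsymbol{0}_n\ \boldsymbol{D}_k]\})$; $\boldsymbol{D}^U_{k+1}$: select $p$ linearly independent directions among $\boldsymbol{x}_k+\boldsymbol{s}_k-\boldsymbol{x}_{k+1}$ and $\boldsymbol{x}_k+\boldsymbol{d}_i+\boldsymbol{d}_j-\boldsymbol{x}_{k+1}$, apply REMOVE$(\cdot,\Delta_{k+1},p_{\mathrm{rand}})$, delete columns of norm $>\epsilon_{\mathrm{rad}}\Delta_{k+1}$, while nonempty with $\sigma_{\min}<\epsilon_{\mathrm{geo}}$ apply REMOVE$(\cdot,\Delta_{k+1},1)$, optionally remove more by REMOVE; with $p_1$ remaining columns, $\boldsymbol{D}^R_{k+1}$ = GEN$(p-p_1,\Delta_{k+1},$ orthonormal basis of column space of $\boldsymbol{D}^U_{k+1})$, $\boldsymbol{D}_{k+1}=[\boldsymbol{D}^U_{k+1}\ \boldsymbol{D}^R_{k+1}]$. Otherwise: $\Delta_{k+1}=\gamma_{\mathrm{dec}}\Delta_k$, $\boldsymbol{x}_{k+1}=\boldsymbol{x}_k$, $\boldsymbol{D}_{k+1}=\gamma_{\mathrm{dec}}\boldsymbol{D}_k$. Stop if $\Delta_{k+1}<\Delta_{\min}$. Definition: given $\overline\Delta>0$, $\boldsymbol{x}\in\mathcal{C}$, continuously differentiable $f$ and $\boldsymbol{Q}\in\mathbb{R}^{n\times p}$ with orthonormal columns, a family $\{\widehat m_\Delta\}_{\Delta\in(0,\overline\Delta]}$ of functions $\mathbb{R}^p\to\mathbb{R}$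 is a class of $(\mathcal{C},\boldsymbol{Q})$-fully linear models of $f$ at $\boldsymbol{x}$ parameterized by $\Delta$ if there are $\kappa_{ef},\kappa_{eg}>0$ with, for all $\Delta\in(0,\overline\Delta]$ and $\widehat{\boldsymbol{s}}\in\boldsymbol{Q}^\top(\mathcal{C}-\boldsymbol{x})$, $\|\widehat{\boldsymbol{s}}\|\le\Delta$: $|f(\boldsymbol{x}+\boldsymbol{Q}\widehat{\boldsymbol{s}})-\widehat m_\Delta(\widehat{\boldsymbol{s}})|\le\kappa_{ef}\Delta^2$ and $\max_{\boldsymbol{d}\in\boldsymbol{Q}^\top(\mathcal{C}-\boldsymbol{x}),\|\boldsymbol{d}\|\le1}|(\boldsymbol{Q}^\top\nabla f(\boldsymbol{x}+\boldsymbol{Q}\widehat{\boldsymbol{s}})-\nabla\widehat m_\Delta(\widehat{\boldsymbol{s}}))^\top\boldsymbol{d}|\le\kappa_{eg}\Delta$. *)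

(* Defs.v *)
From HB Require Import structures.
From mathcomp Require Import all_boot all_order all_algebra.
From mathcomp Require Import all_classical all_reals all_analysis.
Set Implicit Arguments. Unset Strict Implicit. Unset Printing Implicit Defensive.
Import Order.TTheory GRing.Theory Num.Theory.
Import numFieldNormedType.Exports.
Local Open Scope classical_set_scope.
Local Open Scope ring_scope.

Section CLARSTA.
Variable R : realType.
Variable n : nat.

Definition dotv {m} (u v : 'cV[R]_m) : R := \sum_i u i 0 * v i 0.
Definition enorm {m} (v : 'cV[R]_m) : R := Num.sqrt (dotv v v).

Definition mx_of_seq (s : seq 'cV[R]_n) : 'M[R]_(n, size s) :=
  \matrix_(i < n, j < size s) (nth 0 s j) i 0.

(** Smallest singular value (for matrices with at most as many columns as rows):
    min over unit vectors v of ||M v||. *)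
Definition sigma_min {m} (M : 'M[R]_(n, m)) : R :=
  inf [set enorm (M *m v) | v in [set v : 'cV[R]_m | enorm v = 1]].

Definition convexC (C : set 'cV[R]_n) : Prop :=
  forall x y t, C x -> C y -> 0 <= t <= 1 -> C (t *: x + (1 - t) *: y).

Definition is_proj (C : set 'cV[R]_n) (y z : 'cV[R]_n) : Prop :=
  C z /\ forall w, C w -> enorm (y - z) <= enorm (y - w).

Definition is_QR {m} (D Q : 'M[R]_(n, m)) (Rm : 'M[R]_m) : Prop :=
  Q^T *m Q = 1%:M /\ Rm \in unitmx /\ D = Q *m Rm.

Definition QCx (C : set 'cV[R]_n) (x : 'cV[R]_n) {m} (Q : 'M[R]_(n, m)) : set 'cV[R]_m :=
  [set Q^T *m (z - x) | z in C].

(** GEN(q, Delta, B): B has orthonormal columns (B with 0 columns = "no Q given").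
    A is (a realization of) the random draw: any full-column-rank n x q matrix. *)
Definition GEN {m} (q : nat) (Delta : R) (B : 'M[R]_(n, m)) (out : seq 'cV[R]_n) : Prop :=
  exists A : 'M[R]_(n, q), \rank A = q /\
    exists (Qt : 'M[R]_(n, q)) (Rt : 'M[R]_q),
      is_QR (A - B *m B^T *m A) Qt Rt /\
      out = [seq Delta *: col j Qt | j <- enum 'I_q].

Definition rem_at (i : nat) (s : seq 'cV[R]_n) : seq 'cV[R]_n :=
  take i s ++ drop i.+1 s.

Definition theta (Delta : R) (s : seq 'cV[R]_n) (i : nat) : R :=
  sigma_min (mx_of_seq (rem_at i s)) *
  Num.max (enorm (nth 0 s i) ^+ 4 / Delta ^+ 4) 1.

Definition remove1 (Delta : R) (s s' : seq 'cV[R]_n) : Prop :=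
  exists i, (i < size s)%N /\
    (forall j, (j < size s)%N -> theta Delta s j <= theta Delta s i) /\
    s' = rem_at i s.

Fixpoint removeN (Delta : R) (r : nat) (s s' : seq 'cV[R]_n) : Prop :=
  match r with
  | 0%N => s' = s
  | r'.+1 => exists s1, remove1 Delta s s1 /\ removeN Delta r' s1 s'
  end.

Inductive geo_loop (Delta eps_geo : R) : seq 'cV[R]_n -> seq 'cV[R]_n -> Prop :=
| geo_stop s : (s = [::] \/ eps_geo <= sigma_min (mx_of_seq s)) ->
    geo_loop Delta eps_geo s s
| geo_go s s1 s' : s <> [::] -> sigma_min (mx_of_seq s) < eps_geo ->
    remove1 Delta s s1 -> geo_loop Delta eps_geo s1 s' -> geo_loop Delta eps_geo s s'.

Definition model_grad (f : 'cV[R]_n -> R) (x : 'cV[R]_n) {m}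
  (Q : 'M[R]_(n, m)) (Rm : 'M[R]_m) : 'cV[R]_m :=
  invmx Rm^T *m \col_(i < m) (f (x + Q *m col i Rm) - f x).

Definition model_val (f : 'cV[R]_n -> R) (x : 'cV[R]_n) {m}
  (Q : 'M[R]_(n, m)) (Rm : 'M[R]_m) (s : 'cV[R]_m) : R :=
  f (x + Q *m 0) + dotv (model_grad f x Q Rm) s.

Definition pi_m (C : set 'cV[R]_n) (x : 'cV[R]_n) {m} (Q : 'M[R]_(n, m)) (g : 'cV[R]_m) : R :=
  `| inf [set dotv g d | d in [set d | QCx C x Q d /\ enorm d <= 1]] |.

(** One iteration k of CLARSTA, from state (x, Delta, D) to (x', Delta', D').
    D, D' are the lists of columns of D_k, D_{k+1}. *)
Definition clarsta_step (C : set 'cV[R]_n) (f : 'cV[R]_n -> R) (p prand : nat)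
  (Dmax gdec : R) (ginc : nat -> R) (eta1 eta2 mu eps_rad eps_geo : R) (k : nat)
  (x : 'cV[R]_n) (Delta : R) (D : seq 'cV[R]_n)
  (x' : 'cV[R]_n) (Delta' : R) (D' : seq 'cV[R]_n) : Prop :=
  exists (Q : 'M[R]_(n, size D)) (Rm : 'M[R]_(size D)),
    is_QR (mx_of_seq D) Q Rm /\
    let g := model_grad f x Q Rm in
    if Delta <= mu * pi_m C x Q g then
      exists (sh : 'cV[R]_(size D)) (xs : 'cV[R]_n),
        (exists z, C z /\ sh = Q^T *m z) /\ enorm sh <= Delta /\
        is_proj C (x + Q *m sh) xs /\
        let s := xs - x in
        let rho := (f x - f (x + s)) /
                   (model_val f x Q Rm 0 - model_val f x Q Rm sh) in
        Delta' = (if rho < eta1 then gdec * Delta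
                  else if eta2 < rho then Num.min (ginc k * Delta) Dmax
                  else Delta) /\
        C x' /\ f x' <= f (x + s) /\
        (forall a b, a \in (0 :: D) -> b \in (0 :: D) -> C (x + a + b) ->
           f x' <= f (x + a + b)) /\
        exists (sel D1 D3 : seq 'cV[R]_n) (r : nat) (D4 : seq 'cV[R]_n)
               (m : nat) (B : 'M[R]_(n, m)) (DR : seq 'cV[R]_n),
          size sel = p /\ \rank (mx_of_seq sel) = p /\
          (forall v, v \in sel -> v = x + s - x' \/
             exists a b, a \in (0 :: D) /\ b \in (0 :: D) /\ v = x + a + b - x') /\
          removeN Delta' prand sel D1 /\
          geo_loop Delta' eps_geo [seq v <- D1 | enorm v <= eps_rad * Delta'] D3 /\
          removeN Delta' r D3 D4 /\
          B^T *m B = 1%:M /\ (B^T == (mx_of_seq D4)^T)%MS /\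
          GEN (p - size D4) Delta' B DR /\
          D' = D4 ++ DR
    else
      Delta' = gdec * Delta /\ x' = x /\ D' = map (fun d => gdec *: d) D.

(** Iterations 0..K of CLARSTA are executed with states (xs k, Ds k, Dirs k):
    initialization, and for k < K iteration k is performed and the algorithm
    does not stop (Delta_{k+1} >= Delta_min). *)
Definition clarsta_run (C : set 'cV[R]_n) (f : 'cV[R]_n -> R) (p prand : nat)
  (x0 : 'cV[R]_n) (Delta0 Dmin Dmax gdec : R) (ginc : nat -> R)
  (eta1 eta2 mu eps_rad eps_geo : R)
  (xs : nat -> 'cV[R]_n) (Ds : nat -> R) (Dirs : nat -> seq 'cV[R]_n) (K : nat) : Prop :=
  xs 0%N = x0 /\ Ds 0%N = Delta0 /\ GEN p Delta0 (0 : 'M[R]_(n, 0)) (Dirs 0%N) /\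
  forall k, (k < K)%N ->
    clarsta_step C f p prand Dmax gdec ginc eta1 eta2 mu eps_rad eps_geo k
      (xs k) (Ds k) (Dirs k) (xs k.+1) (Ds k.+1) (Dirs k.+1) /\
    Dmin <= Ds k.+1.

(** The (C,Q)-fully-linear error bounds at a single radius Delta, for a model
    mh with gradient gm (constant, the model being linear). *)
Definition fully_linear_bounds (C : set 'cV[R]_n) (f : 'cV[R]_n -> R)
  (gradf : 'cV[R]_n -> 'cV[R]_n) (x : 'cV[R]_n) {m} (Q : 'M[R]_(n, m))
  (mh : 'cV[R]_m -> R) (gm : 'cV[R]_m) (Delta kef keg : R) : Prop :=
  forall sh, QCx C x Q sh -> enorm sh <= Delta ->
    `|f (x + Q *m sh) - mh sh| <= kef * Delta ^+ 2 /\
    forall d, QCx C x Q d -> enorm d <= 1 ->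
      `|dotv (Q^T *m gradf (x + Q *m sh) - gm) d| <= keg * Delta.

End CLARSTA.

(* Main.v *)
Require Import Defs.
From HB Require Import structures.
From mathcomp Require Import all_boot all_order all_algebra.
From mathcomp Require Import all_classical all_reals all_analysis.
From mathcomp Require Import ring lra.
Import Order.TTheory GRing.Theory Num.Theory.
Import numFieldNormedType.Exports.
Local Open Scope classical_set_scope.
Local Open Scope ring_scope.

Section LinAlg.
Variable R : realType.

Lemma dotvE {m} (u v : 'cV[R]_m) : dotv u v = (u^T *m v) 0 0.
Proof. by rewrite /dotv !mxE; apply: eq_bigr => i _; rewrite mxE. Qed.

Lemma dotvC {m} (u v : 'cV[R]_m) : dotv u v = dotv v u.
Proof. by rewrite /dotv; apply: eq_bigr => i _; rewrite mulrC. Qed.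

Lemma dotvDl {m} (u w v : 'cV[R]_m) : dotv (u + w) v = dotv u v + dotv w v.
Proof. by rewrite /dotv -big_split; apply: eq_bigr => i _; rewrite mxE mulrDl. Qed.

Lemma dotvZl {m} a (u v : 'cV[R]_m) : dotv (a *: u) v = a * dotv u v.
Proof. by rewrite /dotv mulr_sumr; apply: eq_bigr => i _; rewrite mxE mulrA. Qed.

Lemma dotvNl {m} (u v : 'cV[R]_m) : dotv (- u) v = - dotv u v.
Proof. by rewrite -scaleN1r dotvZl mulN1r. Qed.

Lemma dotvBl {m} (u w v : 'cV[R]_m) : dotv (u - w) v = dotv u v - dotv w v.
Proof. by rewrite dotvDl dotvNl. Qed.

Lemma dotvDr {m} (u w v : 'cV[R]_m) : dotv v (u + w) = dotv v u + dotv v w.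
Proof. by rewrite !(dotvC v) dotvDl. Qed.

Lemma dotvZr {m} a (u v : 'cV[R]_m) : dotv v (a *: u) = a * dotv v u.
Proof. by rewrite !(dotvC v) dotvZl. Qed.

Lemma dotvBr {m} (u w v : 'cV[R]_m) : dotv v (u - w) = dotv v u - dotv v w.
Proof. by rewrite !(dotvC v) dotvBl. Qed.

Lemma dotv0l {m} (v : 'cV[R]_m) : dotv 0 v = 0.
Proof. by rewrite /dotv big1 // => i _; rewrite mxE mul0r. Qed.

Lemma dotv0r {m} (v : 'cV[R]_m) : dotv v 0 = 0.
Proof. by rewrite dotvC dotv0l. Qed.

Lemma dotv_ge0 {m} (v : 'cV[R]_m) : 0 <= dotv v v.
Proof. by apply: sumr_ge0 => i _; rewrite -expr2 sqr_ge0. Qed.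

Lemma dotv_eq0 {m} (v : 'cV[R]_m) : dotv v v = 0 -> v = 0.
Proof.
move=> h; apply/matrixP => i j; rewrite ord1 mxE.
have hp : forall i0 : 'I_m, xpredT i0 -> 0 <= v i0 0 * v i0 0.
  by move=> i0 _; rewrite -expr2 sqr_ge0.
have /eqP := @psumr_eq0P R _ xpredT (fun i => v i 0 * v i 0) hp h i isT.
by rewrite mulf_eq0 orbb => /eqP.
Qed.

Lemma dotv_mul {m k} (Q : 'M[R]_(m, k)) u v : dotv (Q *m u) v = dotv u (Q^T *m v).
Proof. by rewrite !dotvE trmx_mul mulmxA. Qed.

Lemma dotv_orth {m k} (Q : 'M[R]_(m, k)) u v : Q^T *m Q = 1%:M ->
  dotv (Q *m u) (Q *m v) = dotv u v.
Proof. by move=> hQ; rewrite dotv_mul mulmxA hQ mul1mx. Qed.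

Lemma enorm_ge0 {m} (v : 'cV[R]_m) : 0 <= enorm v.
Proof. exact: sqrtr_ge0. Qed.

Lemma enorm_sq {m} (v : 'cV[R]_m) : enorm v ^+ 2 = dotv v v.
Proof. by rewrite /enorm sqr_sqrtr // dotv_ge0. Qed.

Lemma enormZ {m} a (v : 'cV[R]_m) : enorm (a *: v) = `|a| * enorm v.
Proof. by rewrite /enorm dotvZl dotvZr mulrA -expr2 sqrtrM ?sqr_ge0 // sqrtr_sqr. Qed.

Lemma enorm_orth {m k} (Q : 'M[R]_(m, k)) v : Q^T *m Q = 1%:M ->
  enorm (Q *m v) = enorm v.
Proof. by move=> hQ; rewrite /enorm dotv_orth. Qed.

Lemma CS_sq {m} (u v : 'cV[R]_m) : dotv u v ^+ 2 <= dotv u u * dotv v v.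
Proof.
have [v0|vpos] := eqVneq (dotv v v) 0.
  by rewrite (dotv_eq0 v v0) dotv0r dotv0r mulr0 expr0n.
have vp : 0 < dotv v v by rewrite lt_neqAle eq_sym vpos dotv_ge0.
set t := dotv u v / dotv v v.
have := dotv_ge0 (u - t *: v).
rewrite dotvBl !dotvBr !dotvZl !dotvZr (dotvC v u) => h.
have e : t * dotv v v = dotv u v by rewrite /t mulfVK.
have : 0 <= dotv u u - dotv u v * t.
  move: h; rewrite (mulrA t t) -(mulrA t t (dotv v v)) e; lra.
by rewrite subr_ge0 /t mulrA -expr2 ler_pdivrMr.
Qed.

Lemma CS {m} (u v : 'cV[R]_m) : `|dotv u v| <= enorm u * enorm v.
Proof.
rewrite -(@ler_pXn2r _ 2) ?nnegrE ?mulr_ge0 ?enorm_ge0 //.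
by rewrite exprMn !enorm_sq real_normK ?num_real // CS_sq.
Qed.

Lemma enormD {m} (u v : 'cV[R]_m) : enorm (u + v) <= enorm u + enorm v.
Proof.
rewrite -(@ler_pXn2r _ 2) ?nnegrE ?addr_ge0 ?enorm_ge0 //.
rewrite enorm_sq sqrrD !enorm_sq dotvDl !dotvDr (dotvC v u).
have := CS u v; have := ler_norm (dotv u v); lra.
Qed.

Lemma enormN {m} (v : 'cV[R]_m) : enorm (- v) = enorm v.
Proof. by rewrite -scaleN1r enormZ normrN1 mul1r. Qed.

Lemma enormB {m} (u v : 'cV[R]_m) : enorm (u - v) = enorm (v - u).
Proof. by rewrite -enormN opprB. Qed.



Section Taylor.
Variables (n : nat) (f : 'cV[R]_n -> R) (gradf : 'cV[R]_n -> 'cV[R]_n) (L : R).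
Hypothesis hf : forall x, differentiable f x /\ forall v, 'd f x v = dotv (gradf x) v.

Lemma phi_derive (x h : 'cV[R]_n) (t : R) :
  is_derive t 1 (fun t => f (x + t *: h)) (dotv (gradf (x + t *: h)) h).
Proof.
have dg : is_diff t (fun t : R => x + t *: h) (fun t => 0 + t *: h).
  apply: is_diffD.
have df : is_diff (x + t *: h) f ('d f (x + t *: h)) by apply: DiffDef; [exact: (hf _).1|].
have dc := is_diff_comp dg df.
have -> : (fun t => f (x + t *: h)) = f \o (fun t : R => x + t *: h) by [].
apply: DeriveDef; first exact/diff_derivable.
rewrite deriveE // diff_val /= scale1r add0r. exact: (hf _).2.
Qed.

Lemma psi_derive (x h : 'cV[R]_n) (a c t : R) :
  is_derive t 1 (fun t => f (x + t *: h) - (a * t + c * (t * t)))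
    (dotv (gradf (x + t *: h)) h - (a + c * (t + t))).
Proof.
have h1 := phi_derive x h t.
have h2 : is_derive t 1 (fun t : R => a * t + c * (t * t)) (a + c * (t + t)).
  by apply: is_derive_eq; change (a * 1 + c * (t * 1 + t * 1) = a + c * (t + t)); rewrite !mulr1.
exact: is_deriveB.
Qed.

Hypothesis hL : forall x y, enorm (gradf x - gradf y) <= L * enorm (x - y).


Lemma psi_mvt (x h : 'cV[R]_n) (a c : R) :
  exists2 t, 0 < t < 1 &
   (f (x + 1 *: h) - (a * 1 + c * (1 * 1))) - (f (x + 0 *: h) - (a * 0 + c * (0 * 0)))
   = (dotv (gradf (x + t *: h)) h - (a + c * (t + t))) * (1 - 0).
Proof.
have cont : {within `[0, 1], continuous (fun t => f (x + t *: h) - (a * t + c * (t * t)))}.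
  apply: derivable_within_continuous => t _.
  by have [] := psi_derive x h a c t.
have [t ht e] := @MVT R (fun t => f (x + t *: h) - (a * t + c * (t * t)))
  (fun t => dotv (gradf (x + t *: h)) h - (a + c * (t + t))) 0 1 ltr01
  (fun t _ => psi_derive x h a c t) cont.
by exists t; first by move: ht; rewrite in_itv.
Qed.

Lemma taylor (x h : 'cV[R]_n) :
  `|f (x + h) - f x - dotv (gradf x) h| <= L / 2 * dotv h h.
Proof.
set a := dotv (gradf x) h; set q := dotv h h.
have key : forall t, 0 < t -> `|dotv (gradf (x + t *: h)) h - a| <= L * t * q.
  move=> t tp; rewrite /a -dotvBl.
  apply: (le_trans (CS _ _)).
  rewrite -[q]enorm_sq expr2 mulrA ler_wpM2r ?enorm_ge0 //.
  apply: le_trans (hL _ _) _; rewrite addrC addKr enormZ ger0_norm ?(ltW tp) //.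
  by rewrite mulrA.
have [t /andP[t0 t1] e1] := psi_mvt x h a (L / 2 * q).
have [s /andP[s0 s1] e2] := psi_mvt x h a (- (L / 2 * q)).
have k1 := key t t0; have k2 := key s s0.
rewrite !scale1r !scale0r !addr0 in e1 e2.
rewrite ler_norml; apply/andP; split.
- move: k2; rewrite ler_norml => /andP[k2 _]; move: e2; nra.
- move: k1; rewrite ler_norml => /andP[_ k1]; move: e1; nra.
Qed.
End Taylor.

Section Seqs.
Variable n : nat.
Implicit Types (s : seq 'cV[R]_n) (c : nat -> R).

Definition lc s c : 'cV[R]_n := \sum_(0 <= j < size s) c j *: nth 0 s j.
Definition sq s c : R := \sum_(0 <= j < size s) c j ^+ 2.
Definition Pgeo (k : R) s := forall c, k ^+ 2 * sq s c <= dotv (lc s c) (lc s c).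

Lemma lc_nil c : lc [::] c = 0.
Proof. by rewrite /lc big_geq. Qed.
Lemma sq_nil c : sq [::] c = 0.
Proof. by rewrite /sq big_geq. Qed.

Lemma lc_cons x s c : lc (x :: s) c = c 0%N *: x + lc s (fun j => c j.+1).
Proof. by rewrite /lc /= big_nat_recl. Qed.
Lemma sq_cons x s c : sq (x :: s) c = c 0%N ^+ 2 + sq s (fun j => c j.+1).
Proof. by rewrite /sq /= big_nat_recl. Qed.

Lemma lc0 s : lc s (fun _ => 0) = 0.
Proof. by rewrite /lc big1 // => j _; rewrite scale0r. Qed.
Lemma sq0 s : sq s (fun _ => 0) = 0.
Proof. by rewrite /sq big1 // => j _; rewrite expr0n. Qed.

Lemma subseq_embeds s' s : subseq s' s ->
  forall c, exists c', lc s c' = lc s' c /\ sq s c' = sq s' c.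
Proof.
elim: s s' => [|x s IH] s'.
  by rewrite subseq0 => /eqP -> c; exists c.
case: s' => [_ c|y s1].
  by exists (fun _ => 0); rewrite lc0 sq0 lc_nil sq_nil.
rewrite /=; case: eqP => [-> hs c|_ hs c].
  have [c1 [e1 e2]] := IH _ hs (fun j => c j.+1).
  exists (fun j => if j is j'.+1 then c1 j' else c 0%N).
  by rewrite !lc_cons !sq_cons e1 e2.
have [c1 [e1 e2]] := IH _ hs c.
exists (fun j => if j is j'.+1 then c1 j' else 0).
by rewrite lc_cons sq_cons e1 e2 scale0r add0r expr0n add0r.
Qed.

Lemma Pgeo_sub k s' s : subseq s' s -> Pgeo k s -> Pgeo k s'.
Proof.
move=> hs hP c; have [c' [e1 e2]] := subseq_embeds _ _ hs c.
by rewrite -e1 -e2.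
Qed.

Lemma lc_cat a b c : lc (a ++ b) c = lc a c + lc b (fun j => c (size a + j)%N).
Proof.
elim: a c => [|x a IH] c /=.
  by rewrite lc_nil add0r.
rewrite !lc_cons IH addrA; congr (_ + lc b _).
Qed.

Lemma sq_cat a b c : sq (a ++ b) c = sq a c + sq b (fun j => c (size a + j)%N).
Proof.
elim: a c => [|x a IH] c /=.
  by rewrite sq_nil add0r.
rewrite !sq_cons IH addrA; congr (_ + sq b _).
Qed.

Lemma lc_map a s c : lc (map (fun d => a *: d) s) c = a *: lc s c.
Proof.
elim: s c => [|x s IH] c /=; first by rewrite !lc_nil scaler0.
by rewrite !lc_cons IH scalerDr !scalerA mulrC.
Qed.

Lemma sq_map a s c : sq (map (fun d => a *: d) s) c = sq s c.
Proof. by rewrite /sq size_map. Qed.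

Lemma lc_orth s c v : (forall d, d \in s -> dotv d v = 0) -> dotv (lc s c) v = 0.
Proof.
elim: s c => [|x s IH] c h; first by rewrite lc_nil dotv0l.
rewrite lc_cons dotvDl dotvZl h ?mem_head // mulr0 add0r IH // => d hd.
by apply: h; rewrite in_cons hd orbT.
Qed.

Lemma lc_enum q (F : 'I_q -> 'cV[R]_n) c :
  lc [seq F j | j <- enum 'I_q] c = \sum_(j < q) c j *: F j.
Proof.
rewrite /lc size_map size_enum_ord big_mkord; apply: eq_bigr => j _.
by rewrite (nth_map j) ?size_enum_ord // nth_ord_enum.
Qed.

Lemma sq_enum q (F : 'I_q -> 'cV[R]_n) c :
  sq [seq F j | j <- enum 'I_q] c = \sum_(j < q) c j ^+ 2.
Proof. by rewrite /sq size_map size_enum_ord big_mkord. Qed.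


Lemma lc_eq s c c' : (forall j, (j < size s)%N -> c j = c' j) -> lc s c = lc s c'.
Proof. by move=> h; rewrite /lc; apply: eq_big_nat => j /andP[_ hj]; rewrite h. Qed.
Lemma sq_eq s c c' : (forall j, (j < size s)%N -> c j = c' j) -> sq s c = sq s c'.
Proof. by move=> h; rewrite /sq; apply: eq_big_nat => j /andP[_ hj]; rewrite h. Qed.

Definition vco {m} (v : 'cV[R]_m) (j : nat) : R :=
  if @insub nat (fun j => (j < m)%N) 'I_m j is Some i then v i 0 else 0.

Lemma vcoE {m} (v : 'cV[R]_m) (i : 'I_m) : vco v i = v i 0.
Proof. by rewrite /vco valK. Qed.

Lemma mx_lc s (v : 'cV[R]_(size s)) :
  mx_of_seq s *m v = lc s (fun j => vco v j).
Proof.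
apply/matrixP => i k; rewrite ord1 !mxE /lc summxE big_mkord.
by apply: eq_bigr => j _; rewrite !mxE vcoE mulrC.
Qed.

Lemma sq_dot s (v : 'cV[R]_(size s)) : dotv v v = sq s (fun j => vco v j).
Proof.
by rewrite /dotv /sq big_mkord; apply: eq_bigr => j _; rewrite vcoE expr2.
Qed.

Lemma col_mx_of_seq s (i : 'I_(size s)) : col i (mx_of_seq s) = nth 0 s i.
Proof. by apply/matrixP => a b; rewrite ord1 !mxE. Qed.

Lemma sigma_lb m (M : 'M[R]_(n, m)) v : sigma_min M * enorm v <= enorm (M *m v).
Proof.
have [e0|epos] := eqVneq (enorm v) 0.
  by rewrite e0 mulr0 enorm_ge0.
have ep : 0 < enorm v by rewrite lt_neqAle eq_sym epos enorm_ge0.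
set u := (enorm v)^-1 *: v.
have hu : enorm u = 1 by rewrite enormZ ger0_norm ?invr_ge0 ?enorm_ge0 // mulVf.
have : sigma_min M <= enorm (M *m u).
  apply: ge_inf; last by exists u.
  by exists 0 => _ [w _ <-]; rewrite enorm_ge0.
rewrite /u -scalemxAr enormZ ger0_norm ?invr_ge0 ?enorm_ge0 //.
by rewrite mulrC ler_pdivlMr // mulrC.
Qed.

Lemma Pgeo_mx k s : Pgeo k s ->
  forall v : 'cV[R]_(size s), k ^+ 2 * dotv v v <= dotv (mx_of_seq s *m v) (mx_of_seq s *m v).
Proof. by move=> h v; rewrite mx_lc sq_dot. Qed.

Lemma sigma_Pgeo e s : 0 <= e -> e <= sigma_min (mx_of_seq s) -> Pgeo e s.
Proof.
move=> e0 hs c; set v : 'cV[R]_(size s) := \col_(j < size s) c j.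
have e1 : lc s c = mx_of_seq s *m v.
  by rewrite mx_lc; apply: lc_eq => j hj; rewrite -[j]/(val (Ordinal hj)) vcoE mxE.
have e2 : sq s c = dotv v v.
  by rewrite sq_dot; apply: sq_eq => j hj; rewrite -[j]/(val (Ordinal hj)) vcoE mxE.
rewrite e1 e2 -!enorm_sq -exprMn.
rewrite (@ler_pXn2r _ 2) ?nnegrE ?mulr_ge0 ?enorm_ge0 //.
apply: (le_trans _ (sigma_lb _ _ _)).
by rewrite ler_wpM2r ?enorm_ge0.
Qed.

Lemma sum_col q (Qt : 'M[R]_(n, q)) c :
  \sum_(j < q) c j *: col j Qt = Qt *m \col_(j < q) c j.
Proof.
apply/matrixP => i k; rewrite ord1 !mxE summxE; apply: eq_bigr => j _.
by rewrite !mxE mulrC.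
Qed.

Lemma dot_colv q c : dotv (\col_(j < q) c j) (\col_(j < q) c j) = \sum_(j < q) c j ^+ 2.
Proof. by rewrite /dotv; apply: eq_bigr => j _; rewrite !mxE expr2. Qed.

End Seqs.
Arguments lc {n}. Arguments sq {n}. Arguments Pgeo {n}.

Section Struct.
Set Implicit Arguments.
Variable n : nat.
Implicit Types (s : seq 'cV[R]_n).

Lemma rem_at_subseq i s : subseq (rem_at i s) s.
Proof.
rewrite /rem_at -{3}(cat_take_drop i s) subseq_cat2l.
by rewrite -(add1n i) -drop_drop drop_subseq.
Qed.

Lemma remove1_subseq D s s' : remove1 D s s' -> subseq s' s.
Proof. by case=> i [_ [_ ->]]; apply: rem_at_subseq. Qed.

Lemma removeN_subseq D r s s' : removeN D r s s' -> subseq s' s.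
Proof.
elim: r s => [|r IH] s /=; first by move=> ->; apply: subseq_refl.
case=> s1 [h1 h2]; exact: (subseq_trans (IH _ h2) (remove1_subseq h1)).
Qed.

Lemma geo_loop_subseq D e s s' : geo_loop D e s s' -> subseq s' s.
Proof.
elim=> [s0 _|s0 s1 s2 _ _ h1 _ IH]; first exact: subseq_refl.
exact: (subseq_trans IH (remove1_subseq h1)).
Qed.

Lemma Pgeo_nil k : Pgeo k ([::] : seq 'cV[R]_n).
Proof. by move=> c; rewrite sq_nil lc_nil mulr0 dotv0l. Qed.

Lemma geo_loop_Pgeo D e s s' : 0 <= e -> geo_loop D e s s' -> Pgeo e s'.
Proof.
move=> e0; elim=> [s0 [->|h]|s0 s1 s2 _ _ _ _ IH] //; first exact: Pgeo_nil.
exact: sigma_Pgeo.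
Qed.

Lemma GEN_spec m q (Dl : R) (B : 'M[R]_(n, m)) out : B^T *m B = 1%:M -> GEN q Dl B out ->
  exists Qt : 'M[R]_(n, q), Qt^T *m Qt = 1%:M /\ B^T *m Qt = 0 /\
    out = [seq Dl *: col j Qt | j <- enum 'I_q].
Proof.
move=> hB [A [_ [Qt [Rt [[hQ [hR hA]] ->]]]]].
exists Qt; split=> //; split=> //.
have e1 : B^T *m (A - B *m B^T *m A) = 0.
  by rewrite mulmxBr !mulmxA hB mul1mx subrr.
have -> : Qt = (A - B *m B^T *m A) *m invmx Rt by rewrite hA mulmxK.
by rewrite mulmxA e1 mul0mx.
Qed.

Lemma enorm_col q (Qt : 'M[R]_(n, q)) j : Qt^T *m Qt = 1%:M -> enorm (col j Qt) = 1.
Proof.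
move=> hQ; rewrite colE enorm_orth // /enorm /dotv (bigD1 j) //= big1.
  by rewrite !mxE !eqxx /= mulr1 addr0 sqrtr1.
by move=> i /negbTE hi; rewrite !mxE hi mul0r.
Qed.

Lemma DR_lc q (Qt : 'M[R]_(n, q)) (Dl : R) c :
  lc [seq Dl *: col j Qt | j <- enum 'I_q] c = Dl *: (Qt *m \col_(j < q) c j).
Proof.
rewrite lc_enum -sum_col scaler_sumr; apply: eq_bigr => j _.
by rewrite !scalerA mulrC.
Qed.

Lemma DR_dot q (Qt : 'M[R]_(n, q)) (Dl : R) c : Qt^T *m Qt = 1%:M ->
  dotv (lc [seq Dl *: col j Qt | j <- enum 'I_q] c) (lc [seq Dl *: col j Qt | j <- enum 'I_q] c)
  = Dl ^+ 2 * sq [seq Dl *: col j Qt | j <- enum 'I_q] c.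
Proof.
move=> hQ; rewrite DR_lc dotvZl dotvZr dotv_orth // dot_colv sq_enum.
by rewrite mulrA -expr2.
Qed.

End Struct.

Arguments removeN_subseq {n D r s s'}.
Arguments Pgeo_sub {n k s' s}.
Section Step.
Set Implicit Arguments.
Variable n : nat.

Definition Inv (p : nat) (Dmax eps_rad kc Dl : R) (D : seq 'cV[R]_n) : Prop :=
  0 < Dl <= Dmax /\ size D = p /\ (forall d, d \in D -> enorm d <= eps_rad * Dl) /\
  Pgeo (kc * Dl) D.

Lemma sq_ge0 (s : seq 'cV[R]_n) c : 0 <= sq s c.
Proof. by apply: sumr_ge0 => j _; apply: sqr_ge0. Qed.

Lemma DR_norm q (Qt : 'M[R]_(n, q)) (Dl : R) d : Qt^T *m Qt = 1%:M -> 0 <= Dl ->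
  d \in [seq Dl *: col j Qt | j <- enum 'I_q] -> enorm d = Dl.
Proof.
move=> hQ hD /mapP [j _ ->]; by rewrite enormZ enorm_col // mulr1 ger0_norm.
Qed.

Lemma Inv0 p Dl Dmax eps_rad kc (D : seq 'cV[R]_n) :
  GEN p Dl (0 : 'M[R]_(n, 0)) D -> 0 < Dl <= Dmax -> 1 <= eps_rad -> 0 < kc <= 1 ->
  Inv p Dmax eps_rad kc Dl D.
Proof.
move=> hG hD he hk.
have h00 : (0 : 'M[R]_(n, 0))^T *m 0 = 1%:M by apply/matrixP => -[].
have [Qt [hQ [_ ->]]] := GEN_spec h00 hG.
have Dp : 0 < Dl by case/andP: hD.
split=> //; split; first by rewrite size_map size_enum_ord.
split.
  move=> d hd; rewrite (@DR_norm _ _ _ _ hQ (ltW Dp) hd).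
  by rewrite ler_peMl ?(ltW Dp).
move=> c; rewrite DR_dot // ler_wpM2r ?sq_ge0 //.
rewrite (@ler_pXn2r _ 2) ?nnegrE ?mulr_ge0 ?(ltW Dp) //; last by case/andP: hk => /ltW.
by rewrite ler_piMl ?(ltW Dp) //; case/andP: hk.
Qed.


Lemma Pgeo_cat kc (D4 DR : seq 'cV[R]_n) :
  0 <= kc -> Pgeo kc D4 -> Pgeo kc DR ->
  (forall d e, d \in D4 -> e \in DR -> dotv d e = 0) -> Pgeo kc (D4 ++ DR).
Proof.
move=> k0 h4 hR hO c; rewrite lc_cat sq_cat.
set u := lc D4 c; set w := lc DR _.
have uw : dotv u w = 0.
  apply: lc_orth => d hd; rewrite dotvC; apply: lc_orth => e he.
  by rewrite dotvC hO.
rewrite dotvDl !dotvDr uw (dotvC w u) uw addr0 add0r mulrDr.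
by apply: lerD; [apply: h4|apply: hR].
Qed.

Lemma Pgeo_mono k k' (s : seq 'cV[R]_n) : 0 <= k -> k <= k' -> Pgeo k' s -> Pgeo k s.
Proof.
move=> k0 kk h c; apply: le_trans (h c); rewrite ler_wpM2r ?sq_ge0 //.
by rewrite (@ler_pXn2r _ 2) ?nnegrE // (le_trans k0 kk).
Qed.

Lemma Pgeo_DR q (Qt : 'M[R]_(n, q)) (Dl k : R) : Qt^T *m Qt = 1%:M -> 0 <= k <= Dl ->
  Pgeo k [seq Dl *: col j Qt | j <- enum 'I_q].
Proof.
move=> hQ /andP[k0 kD] c; rewrite DR_dot // ler_wpM2r ?sq_ge0 //.
by rewrite (@ler_pXn2r _ 2) ?nnegrE // (le_trans k0 kD).
Qed.

Lemma colspace_mem m (B : 'M[R]_(n, m)) (s : seq 'cV[R]_n) :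
  ((mx_of_seq s)^T <= B^T)%MS -> forall d, d \in s -> exists y, d = B *m y.
Proof.
move=> /submxP [X hX] d hd.
have hi : (index d s < size s)%N by rewrite index_mem.
exists (col (Ordinal hi) X^T).
rewrite -{1}(nth_index 0 hd) -[index d s]/(val (Ordinal hi)) -col_mx_of_seq.
by rewrite -(trmxK (mx_of_seq s)) hX trmx_mul trmxK !colE mulmxA.
Qed.

Lemma step_inv C f p prand Dmin Dmax gdec ginc eta1 eta2 mu eps_rad eps_geo kc k
  (x : 'cV[R]_n) Dl D x' Dl' D' :
  0 < gdec < 1 -> 1 <= eps_rad -> 0 < kc <= 1 -> kc * Dmax <= eps_geo -> 0 < Dmin ->
  clarsta_step C f p prand Dmax gdec ginc eta1 eta2 mu eps_rad eps_geo k x Dl D x' Dl' D' ->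
  Dmin <= Dl' -> Inv p Dmax eps_rad kc Dl D -> Inv p Dmax eps_rad kc Dl' D'.
Proof.
move=> /andP[g0 g1] he /andP[k0 k1] hkg hDmin [Q [Rm [_ hb]]] hDl' [/andP[Dp DM] [hsz [hn hP]]].
have Dp' : 0 < Dl' by apply: lt_le_trans hDl'.
move: hb => /=; case: ifP => _.
  case=> sh [xs [_ [_ [_ [eD [_ [_ [_ H]]]]]]]].
  move: H => [sel [D1 [D3 [r [D4 [m [B [DR [hs [_ [_ [h1 [h2 [h3 [hB [hBD [hG ->]]]]]]]]]]]]]]]]].
  have DM' : Dl' <= Dmax.
    rewrite eD; case: ifP => _; first by rewrite (le_trans _ DM) // ler_piMl ?(ltW Dp) ?(ltW g1).
    by case: ifP => _ //; rewrite ge_min lexx orbT.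
  have sub4 : subseq D4 [seq v <- D1 | enorm v <= eps_rad * Dl'].
    exact: (subseq_trans (removeN_subseq h3) (geo_loop_subseq h2)).
  have sub4s : subseq D4 sel.
    exact: (subseq_trans sub4 (subseq_trans (filter_subseq _ _) (removeN_subseq h1))).
  have s4 : (size D4 <= p)%N by rewrite -hs size_subseq.
  have [Qt [hQ [hBQ eDR]]] := GEN_spec hB hG.
  have kD' : 0 <= kc * Dl' by rewrite mulr_ge0 ?(ltW k0) ?(ltW Dp').
  split; first by rewrite Dp'.
  split; first by rewrite size_cat eDR size_map size_enum_ord subnKC.
  split.
    move=> d; rewrite mem_cat => /orP[hd|hd].
      by move: (mem_subseq sub4 hd); rewrite mem_filter => /andP[].
    rewrite eDR in hd; rewrite (@DR_norm _ _ _ _ hQ (ltW Dp') hd).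
    by rewrite ler_peMl ?(ltW Dp').
  apply: Pgeo_cat => //.
  - apply: (@Pgeo_mono _ eps_geo) => //.
      by rewrite (le_trans _ hkg) // ler_wpM2l ?(ltW k0).
    apply: (Pgeo_sub (removeN_subseq h3)); apply: (geo_loop_Pgeo _ h2).
    by rewrite (le_trans kD') // (le_trans _ hkg) // ler_wpM2l ?(ltW k0).
  - by rewrite eDR; apply: Pgeo_DR => //; rewrite kD' ler_piMl ?(ltW Dp').
  - move=> d e hd; rewrite eDR => /mapP [j _ ->].
    case/andP: hBD => _ /colspace_mem /(_ d hd) [y ->].
    rewrite dotvZr colE dotvC dotv_mul mulmxA.
    have -> : Qt^T *m B = 0 by rewrite -(trmxK (Qt^T *m B)) trmx_mul trmxK hBQ trmx0.
    by rewrite mul0mx dotv0r mulr0.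
case=> eD [_ ->]; rewrite eD in Dp' *.
split; first by rewrite Dp' (le_trans _ DM) // ler_piMl ?(ltW Dp) ?(ltW g1).
split; first by rewrite size_map.
split.
  move=> d /mapP [d0 hd0 ->]; rewrite enormZ ger0_norm ?(ltW g0) //.
  by rewrite mulrCA ler_wpM2l ?(ltW g0) ?hn.
move=> c; rewrite lc_map sq_map dotvZl dotvZr (mulrA gdec gdec) -expr2.
have -> : (kc * (gdec * Dl)) ^+ 2 = gdec ^+ 2 * (kc * Dl) ^+ 2 by ring.
by rewrite -mulrA ler_wpM2l ?sqr_ge0 // hP.
Qed.

End Step.

Section Final.
Variables (n : nat) (f : 'cV[R]_n -> R) (gradf : 'cV[R]_n -> 'cV[R]_n) (L : R).
Hypothesis hf : forall x, differentiable f x /\ forall v, 'd f x v = dotv (gradf x) v.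
Hypothesis hL : forall x y, enorm (gradf x - gradf y) <= L * enorm (x - y).

Lemma col_mulmx m k q (A : 'M[R]_(m, k)) (B : 'M[R]_(k, q)) i : col i (A *m B) = A *m col i B.
Proof. by rewrite !colE mulmxA. Qed.

Lemma FL (x : 'cV[R]_n) (D : seq 'cV[R]_n) (Dl rho kc : R)
  (Q : 'M[R]_(n, size D)) (Rm : 'M[R]_(size D)) :
  0 < Dl -> 0 <= L -> 0 < kc -> 0 <= rho -> (forall d, d \in D -> enorm d <= rho * Dl) ->
  Pgeo (kc * Dl) D -> is_QR (mx_of_seq D) Q Rm ->
  forall sh, enorm sh <= Dl ->
   `|f (x + Q *m sh) - model_val f x Q Rm sh| <=
      L / 2 * Dl ^+ 2 + Num.sqrt (size D)%:R * (L / 2 * (rho * Dl) ^+ 2) / (kc * Dl) * Dl /\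
   forall d, enorm d <= 1 ->
   `|dotv (Q^T *m gradf (x + Q *m sh) - model_grad f x Q Rm) d| <=
      L * Dl + Num.sqrt (size D)%:R * (L / 2 * (rho * Dl) ^+ 2) / (kc * Dl).
Proof.
move=> Dp L0 k0 rho0 hn hP [hQ [hR hD]] sh hsh; have Dl0 := ltW Dp.
set E := Num.sqrt (size D)%:R * (L / 2 * (rho * Dl) ^+ 2) / (kc * Dl).
set B := L / 2 * (rho * Dl) ^+ 2.
have kD : 0 < kc * Dl by rewrite mulr_gt0.
have B0 : 0 <= B by rewrite mulr_ge0 ?sqr_ge0 ?divr_ge0.
have E0 : 0 <= E by apply: divr_ge0; [apply: mulr_ge0; [apply: sqrtr_ge0|]|apply: ltW].
set g := model_grad f x Q Rm; set gt := Q^T *m gradf x.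
have keyA : forall w, `|dotv (g - gt) w| <= E * enorm w.
  move=> w; set u := invmx Rm *m w.
  have ew : w = Rm *m u by rewrite /u mulKVmx.
  have -> : dotv (g - gt) w = dotv (Rm^T *m (g - gt)) u by rewrite ew dotv_mul trmxK.
  set e := Rm^T *m (g - gt).
  have ee : forall i, `|e i 0| <= B.
    move=> i; rewrite /e mulmxBr /g /model_grad mulmxA mulmxV ?unitmx_tr // mul1mx.
    rewrite /gt mulmxA -trmx_mul -hD !mxE.
    have -> : Q *m col i Rm = nth 0 D i by rewrite -col_mulmx -hD col_mx_of_seq.
    have -> : \sum_j (mx_of_seq D)^T i j * gradf x j 0 = dotv (gradf x) (nth 0 D i).
      by rewrite /dotv; apply: eq_bigr => j _; rewrite !mxE mulrC.
    apply: le_trans (taylor _ _ _ _ hf hL _ _) _.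
    rewrite /B ler_wpM2l ?divr_ge0 // -enorm_sq.
    rewrite (@ler_pXn2r _ 2) ?nnegrE ?enorm_ge0 ?mulr_ge0 ?(ltW Dp) //.
    by apply: hn; rewrite mem_nth.
  have ne : enorm e <= Num.sqrt (size D)%:R * B.
    rewrite -(ger0_norm B0) -sqrtr_sqr -sqrtrM ?ler0n // /enorm ler_sqrt ?mulr_ge0 ?ler0n ?sqr_ge0 //.
    have -> : (size D)%:R * B ^+ 2 = \sum_(i < size D) B ^+ 2.
      by rewrite sumr_const card_ord mulr_natl.
    rewrite /dotv.
    apply: ler_sum => i _.
    rewrite -expr2 -real_normK ?num_real //.
    by apply: lerXn2r; rewrite ?nnegrE ?normr_ge0 ?ee.
  have nu : kc * Dl * enorm u <= enorm w.
    have h1 : 0 <= kc * Dl * enorm u by rewrite mulr_ge0 ?enorm_ge0 // ltW.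
    rewrite -(@ler_pXn2r _ 2) ?nnegrE ?enorm_ge0 //.
    rewrite exprMn !enorm_sq.
    apply: le_trans (Pgeo_mx _ _ _ hP u) _.
    by rewrite hD -mulmxA -ew dotv_orth.
  apply: (le_trans (CS e u)).
  have hu : enorm u <= enorm w / (kc * Dl) by rewrite ler_pdivlMr // mulrC.
  apply: le_trans (ler_wpM2r (enorm_ge0 u) ne) _.
  have SB : 0 <= Num.sqrt (size D)%:R * B by rewrite mulr_ge0 ?sqrtr_ge0.
  apply: (le_trans (ler_wpM2l SB hu)).
  by rewrite le_eqVlt; apply/orP; left; apply/eqP; rewrite /E /B; ring.
have Qn : forall v, enorm (Q *m v) = enorm v by move=> v; rewrite enorm_orth.
split.
  rewrite /model_val mulmx0 addr0 -/g.
  have -> : f (x + Q *m sh) - (f x + dotv g sh) =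
      (f (x + Q *m sh) - f x - dotv (gradf x) (Q *m sh)) - dotv (g - gt) sh.
    by rewrite dotvBl /gt dotv_mul trmxK; ring.
  apply: le_trans (ler_normB _ _) _; apply: lerD.
    apply: le_trans (taylor _ _ _ _ hf hL _ _) _.
    rewrite -enorm_sq Qn ler_wpM2l ?divr_ge0 //.
    by apply: lerXn2r; rewrite ?nnegrE ?enorm_ge0.
  by apply: le_trans (keyA sh) _; rewrite ler_wpM2l.
move=> d hd.
have -> : Q^T *m gradf (x + Q *m sh) - g =
    Q^T *m (gradf (x + Q *m sh) - gradf x) - (g - gt).
  by rewrite mulmxBr opprB addrA subrK.
rewrite dotvBl; apply: le_trans (ler_normB _ _) _; apply: lerD.
  rewrite dotv_mul trmxK; apply: (le_trans (CS _ _)).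
  apply: le_trans (ler_wpM2r (enorm_ge0 _) (hL _ _)) _.
  rewrite addrC addKr !Qn -mulrA ler_wpM2l // -[Dl]mulr1.
  by apply: ler_pM; rewrite ?enorm_ge0.
apply: le_trans (keyA d) _.
by rewrite -[X in _ <= X]mulr1 ler_wpM2l.
Qed.
End Final.
End LinAlg.
Arguments enorm_ge0 {R m}. Arguments enormN {R m}. Arguments Inv {R n}.
Arguments Inv0 {R n p Dl Dmax eps_rad kc D}.
Arguments FL {R n f gradf L} hf hL {x D Dl rho kc Q Rm}.
Theorem mainTheorem6 (R : realType) (n p prand : nat)
  (C : set 'cV[R]_n) (f : 'cV[R]_n -> R) (gradf : 'cV[R]_n -> 'cV[R]_n) (L : R)
  (x0 : 'cV[R]_n) (Delta0 Dmin Dmax gdec : R) (ginc : nat -> R)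
  (eta1 eta2 mu eps_rad eps_geo : R)
  (xs : nat -> 'cV[R]_n) (Ds : nat -> R) (Dirs : nat -> seq 'cV[R]_n) (K : nat) :
  closed C -> convexC C -> interior C !=set0 ->
  (forall x, differentiable f x /\ forall v, 'd f x v = dotv (gradf x) v) ->
  continuous gradf ->
  (forall x y, enorm (gradf x - gradf y) <= L * enorm (x - y)) ->
  (1 <= prand)%N -> (prand <= p)%N -> (p <= n)%N ->
  C x0 -> 0 < Delta0 -> 0 < Dmin -> Dmin <= Dmax -> Delta0 <= Dmax ->
  0 < gdec < 1 -> (forall k, 1 <= ginc k) ->
  0 < eta1 -> eta1 <= eta2 -> eta2 < 1 -> 0 < mu ->
  1 <= eps_rad -> 0 < eps_geo ->
  clarsta_run C f p prand x0 Delta0 Dmin Dmax gdec ginc eta1 eta2 mu eps_rad eps_geo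
    xs Ds Dirs K ->
  let MR := Num.max eps_geo^-1 Dmin^-1 * eps_rad * Dmax in
  let kef := (2^-1 * L * (1 + Num.sqrt (p%:R) * MR)) * eps_rad ^+ 2 in
  let keg := (2^-1 * L * (2 + Num.sqrt (p%:R) * MR)) * eps_rad in
  0 < Ds K <= Dmax /\
  forall (Q : 'M[R]_(n, size (Dirs K))) (Rm : 'M[R]_(size (Dirs K))),
    is_QR (mx_of_seq (Dirs K)) Q Rm ->
    fully_linear_bounds C f gradf (xs K) Q
      (model_val f (xs K) Q Rm) (model_grad f (xs K) Q Rm) (Ds K) kef keg.
Proof.
move=> hC hcv hint hf hcont hL hpr1 hpr2 hpn hx0 hD0 hDmin hDmm hD0m hg hginc
  he1 he12 he2 hmu heps hgeo [hx [hDs0 [hG0 hrun]]] MR kef keg.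
set M0 := Num.max eps_geo^-1 Dmin^-1 * Dmax.
set kc := M0^-1.
have Dmax0 : 0 < Dmax by apply: lt_le_trans hDmm.
have M01 : 1 <= M0.
  have hm : Dmin^-1 <= Num.max eps_geo^-1 Dmin^-1 by rewrite le_max lexx orbT.
  rewrite /M0 (le_trans _ (ler_wpM2r (ltW Dmax0) hm)) //.
  by rewrite ler_pdivlMl // mulr1.
have M00 : 0 < M0 by apply: lt_le_trans M01.
have kc0 : 0 < kc by rewrite invr_gt0.
have kc1 : kc <= 1 by rewrite invf_le1.
have kcg : kc * Dmax <= eps_geo.
  rewrite mulrC ler_pdivrMr // /M0 mulrA.
  rewrite -[X in X <= _]mul1r ler_wpM2r ?(ltW Dmax0) // -(mulfV (lt0r_neq0 hgeo)).
  by rewrite ler_wpM2l ?(ltW hgeo) // le_max lexx.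
have hn0 : (0 < n)%N by apply: leq_trans hpn; apply: leq_trans hpr2.
have L0 : 0 <= L.
  pose y : 'cV[R]_n := const_mx 1.
  have ey : 0 < enorm y.
    rewrite /enorm sqrtr_gt0 /dotv.
    have -> : \sum_i y i 0 * y i 0 = \sum_(i < n) (1 : R) by apply: eq_bigr => i _; rewrite !mxE mulr1.
    by rewrite sumr_const card_ord ltr0n.
  have := le_trans (enorm_ge0 _) (hL 0 y).
  by rewrite sub0r enormN pmulr_lge0.
have inv : forall k, (k <= K)%N -> Inv p Dmax eps_rad kc (Ds k) (Dirs k).
  elim=> [_|k IH hk].
    rewrite hDs0; apply: Inv0 => //; [by rewrite hD0 hD0m|by rewrite kc0 kc1].
  have [hs hm] := hrun k hk.
  have hk01 : 0 < kc <= 1 by rewrite kc0 kc1.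
  exact: (step_inv Dmin hg heps hk01 kcg hDmin hs hm (IH (ltnW hk))).
have [/andP[Dp DM] [hsz [hn hP]]] := inv K (leqnn K).
split; first by rewrite Dp DM.
move=> Q Rm hQR sh _ hsh.
have rho0 : 0 <= eps_rad by apply: le_trans heps.
have [h1 h2] := FL hf hL (x := xs K) Dp L0 kc0 rho0 hn hP hQR sh hsh.
have eE : Num.sqrt (size (Dirs K))%:R = Num.sqrt p%:R by rewrite hsz.
rewrite eE in h1 h2.
set s := Num.sqrt p%:R in h1 h2.
have s0 : 0 <= s by apply: sqrtr_ge0.
have eE2 : s * (L / 2 * (eps_rad * Ds K) ^+ 2) / (kc * Ds K) =
    s * L / 2 * eps_rad ^+ 2 * Ds K * M0.
  rewrite /kc; field; rewrite ?lt0r_neq0 //.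
rewrite eE2 in h1 h2.
have eMR : MR = M0 * eps_rad by rewrite /MR /M0; ring.
split.
  apply: le_trans h1 _.
  set a := L / 2 * Ds K ^+ 2.
  have a0 : 0 <= a by rewrite /a mulr_ge0 ?divr_ge0 ?sqr_ge0.
  have -> : L / 2 * Ds K ^+ 2 + s * L / 2 * eps_rad ^+ 2 * Ds K * M0 * Ds K =
      a * 1 + a * (s * eps_rad ^+ 2 * M0) by rewrite /a; ring.
  have -> : kef * Ds K ^+ 2 = a * eps_rad ^+ 2 + a * (s * eps_rad ^+ 2 * M0 * eps_rad).
    by rewrite /kef eMR /a -/s; ring.
  apply: lerD; apply: ler_wpM2l => //; first exact: exprn_ege1.
  by apply: ler_peMr heps; apply: mulr_ge0; [apply: mulr_ge0; [|apply: sqr_ge0]|apply: ltW].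
move=> d _ hd; apply: le_trans (h2 d hd) _.
have -> : keg * Ds K = L * Ds K * eps_rad + s * L / 2 * eps_rad ^+ 2 * Ds K * M0.
  by rewrite /keg eMR -/s; field.
by rewrite lerD // ler_peMr // mulr_ge0 // ltW.
Qed.
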